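(* Let $k,n\ge1$, $\mathbf Q_0,\mathbf Q_1,\dots,\mathbf Q_n\in\mathbb S^k$, and let $\mathcal K\subseteq\mathbb R^k$ be a nonempty closed convex cone such that $\mathcal L:=\{\mathbf x\in\mathcal K:\mathbf e_1^\top\mathbf x=1\}$ is nonempty and bounded. Then the optimal value of $$\sup\ \mathbf Q_0\bullet\mathbf X\quad\text{s.t.}\quad\mathbf e_1\mathbf e_1^\top\bullet\mathbf X=1,\ \mathbf X\in\mathcal{CP}(\mathcal K),\ \mathbf Q_i\bullet\mathbf X=0\ \forall i\in[n]$$ equals the optimal value of $$\inf\ \beta\quad\text{s.t.}\quad\beta\mathbf e_1\mathbf e_1^\top+\sum_{i=1}^n\psi_i\mathbf Q_i-\mathbf Q_0\in\mathcal{COP}(\mathcal K),\ \beta\in\mathbb R,\ \boldsymbol\psi\in\mathbb R^n.$$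
   Context: $\mathbb S^k$ is the space of symmetric $k\times k$ matrices, $\mathbf A\bullet\mathbf B=\mathrm{trace}(\mathbf A\mathbf B)$, $\mathbf e_1$ is the first standard basis vector of $\mathbb R^k$, $[n]=\{1,\dots,n\}$. $\mathcal{COP}(\mathcal K)=\{\mathbf M\in\mathbb S^k:\mathbf x^\top\mathbf M\mathbf x\ge0\ \forall\mathbf x\in\mathcal K\}$ (copositive matrices with respect to $\mathcal K$), and $\mathcal{CP}(\mathcal K)$ is its dual cone in $\mathbb S^k$ under $\bullet$ (completely positive matrices with respect to $\mathcal K$). *)

(* Defs.v *)
From HB Require Import structures.
From mathcomp Require Import all_boot all_order all_algebra.
From mathcomp Require Import all_classical all_reals all_analysis.
Set Implicit Arguments. Unset Strict Implicit. Unset Printing Implicit Defensive.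
Import Order.TTheory GRing.Theory Num.Theory.
Import numFieldNormedType.Exports.
Local Open Scope ring_scope.
Local Open Scope classical_set_scope.

Section Defs.
Variable R : realType.

Definition symmx (k : nat) (A : 'M[R]_k) : Prop := A^T = A.

Definition frob (k : nat) (A B : 'M[R]_k) : R := \tr (A *m B).

Definition qform (k : nat) (M : 'M[R]_k) (x : 'cV[R]_k) : R := (x^T *m M *m x) 0 0.

Definition COP (k : nat) (K : set 'cV[R]_k) : set 'M[R]_k :=
  [set M | symmx M /\ forall x, K x -> 0 <= qform M x].

Definition CP (k : nat) (K : set 'cV[R]_k) : set 'M[R]_k :=
  [set X | symmx X /\ forall M, COP K M -> 0 <= frob M X].

Definition convex_cone (k : nat) (K : set 'cV[R]_k) : Prop :=
  (forall x y, K x -> K y -> K (x + y)) /\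
  (forall (t : R) x, 0 <= t -> K x -> K (t *: x)).

(* boundedness of a subset of R^k (entrywise bound; all norms equivalent) *)
Definition bounded_vset (k : nat) (L : set 'cV[R]_k) : Prop :=
  exists r : R, forall x, L x -> forall i, `|x i 0| <= r.

Definition e1 (k : nat) : 'cV[R]_k.+1 := delta_mx 0 0.

End Defs.

(* Main.v *)
Require Import Defs.
From HB Require Import structures.
From mathcomp Require Import all_boot all_order all_algebra.
From mathcomp Require Import all_classical all_reals all_analysis.
From mathcomp Require Import ring lra.
Import Order.TTheory GRing.Theory Num.Theory.
Import numFieldNormedType.Exports.
Local Open Scope ring_scope.
Local Open Scope classical_set_scope.

Module HBpart.
Section HBfin.
Variable R : realType.
Variable V : lmodType R.

Lemma inf_le_f (f : R -> R) b s : (forall s, b <= f s) -> inf (range f) <= f s.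
Proof.
move=> hb; apply: ge_inf; last by exists s.
by exists b => _ [u _ <-]; exact: hb.
Qed.

Lemma f_ge_inf (f : R -> R) a : (forall s, a <= f s) -> a <= inf (range f).
Proof.
move=> h; apply: lb_le_inf; first by exists (f 0), 0.
by move=> _ [u _ <-].
Qed.

Lemma inf_shift (f g : R -> R) a b : (forall s, b <= g s) ->
  (forall s, exists s', f s = g s' + a) -> (forall s', exists s, f s = g s' + a) ->
  inf (range f) = inf (range g) + a.
Proof.
move=> hb h1 h2.
have fb : forall s, b + a <= f s.
  by move=> s; have [s' ->] := h1 s; rewrite lerD2r.
apply/eqP; rewrite eq_le; apply/andP; split.
  rewrite -lerBlDr; apply: f_ge_inf => s'.
  have [s Hs] := h2 s'; rewrite lerBlDr -Hs; exact: (inf_le_f _ _ _ fb).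
apply: f_ge_inf => s.
have [s' ->] := h1 s; rewrite lerD2r; exact: (inf_le_f _ _ _ hb).
Qed.

Definition sublin (p : V -> R) :=
  (forall x y, p (x + y) <= p x + p y) /\
  (forall (t : R) x, 0 <= t -> p (t *: x) = t * p x).

Lemma sublin0 {p} : sublin p -> p 0 = 0.
Proof. by case=> _ h; rewrite -(scale0r (0 : V)) h // mul0r. Qed.

Lemma sublin_lb {p} x : sublin p -> - p (- x) <= p x.
Proof.
move=> hp; have := (proj1 hp) x (- x); rewrite subrr (sublin0 hp).
by move=> h; rewrite lerNl; lra.
Qed.

Definition affine_along (p : V -> R) (w : V) (d : R) :=
  forall x (t : R), p (x + t *: w) = p x + t * d.

Lemma hb_step p z c : sublin p -> - p (- z) <= c -> c <= p z ->
  exists q, [/\ sublin q, (forall x, q x <= p x), affine_along q z c &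
    (forall w d, affine_along p w d -> affine_along q w d)].
Proof.
move=> hp hc1 hc2.
pose F x s := p (x + s *: z) - s * c.
have scle : forall s : R, s * c <= p (s *: z).
  move=> s; have [s0|s0] := leP 0 s.
    by rewrite (proj2 hp) //; apply: ler_wpM2l.
  have -> : s *: z = (- s) *: (- z) by rewrite scaleNr scalerN opprK.
  rewrite (proj2 hp); last by rewrite oppr_ge0 ltW.
  have := @ler_wpM2l _ (- s) _ _ _ hc1; rewrite oppr_ge0 ltW // => /(_ isT).
  rewrite mulrNN !mulNr; lra.
have lowb : forall x s, - p (- x) <= F x s.
  move=> x s; rewrite /F.
  have h := (proj1 hp) (x + s *: z) (- x).
  rewrite addrC addKr in h; have := scle s; lra.
pose q x := inf (range (F x)).
have qle : forall x s, q x <= F x s by move=> x s; exact: (inf_le_f _ _ _ (lowb x)).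
have qge : forall x a, (forall s, a <= F x s) -> a <= q x.
  by move=> x a; exact: f_ge_inf.
have q0 : q 0 = 0.
  apply/eqP; rewrite eq_le; apply/andP; split.
    by have := qle 0 0; rewrite /F scale0r addr0 mul0r subr0 (sublin0 hp).
  by apply: qge => s; have := lowb 0 s; rewrite oppr0 (sublin0 hp) oppr0.
exists q; split.
- split.
  + move=> x y.
    have h1 : forall s1 s2, q (x + y) <= F x s1 + F y s2.
      move=> s1 s2; apply: (le_trans (qle _ (s1 + s2))); rewrite /F.
      have := (proj1 hp) (x + s1 *: z) (y + s2 *: z).
      have -> : x + s1 *: z + (y + s2 *: z) = x + y + (s1 + s2) *: z.
        by rewrite scalerDl; rewrite -!addrA; congr (_ + _);
           rewrite addrC -!addrA; congr (_ + _); rewrite addrC.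
      lra.
    have h2 : forall s2, q (x + y) - F y s2 <= q x.
      by move=> s2; apply: qge => s1; have := h1 s1 s2; lra.
    have : q (x + y) - q x <= q y by apply: qge => s2; have := h2 s2; lra.
    lra.
  + move=> t x; rewrite le_eqVlt => /predU1P[<-|t0].
      by rewrite scale0r mul0r q0.
    apply/eqP; rewrite eq_le; apply/andP; split.
      rewrite -ler_pdivrMl //; apply: qge => s.
      rewrite ler_pdivrMl //; apply: (le_trans (qle _ (t * s))); rewrite /F.
      rewrite -scalerA -scalerDr (proj2 hp); last exact: ltW.
      by rewrite mulrBr mulrA.
    apply: qge => s.
    apply: (le_trans (ler_wpM2l (ltW t0) (qle x (s / t)))).
    rewrite /F.
    have -> : x + (s / t) *: z = t^-1 *: (t *: x + s *: z).
      by rewrite scalerDr scalerA mulVf ?gt_eqF // scale1r scalerA mulrC.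
    rewrite (proj2 hp); last by rewrite invr_ge0 ltW.
    rewrite mulrBr mulrA mulfV ?gt_eqF // mul1r.
    have -> : t * (s / t * c) = s * c by field; rewrite gt_eqF.
    by [].
- move=> x; have := qle x 0; rewrite /F scale0r addr0 mul0r subr0 //.
- move=> x t; rewrite /q (@inf_shift (F (x + t *: z)) (F x) (t * c) (- p (- x))) //.
  + move=> s; exists (t + s); rewrite /F scalerDl addrA; lra.
  + move=> s'; exists (s' - t); rewrite /F -addrA -scalerDl [t + _]addrC subrK; lra.
- move=> w d hw x t.
  rewrite /q (@inf_shift (F (x + t *: w)) (F x) (t * d) (- p (- x))) //.
  + move=> s; exists s; rewrite /F -addrA [t *: w + _]addrC addrA hw; lra.
  + move=> s; exists s; rewrite /F -addrA [t *: w + _]addrC addrA hw; lra.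
Qed.


Lemma hb_list (zs : seq V) p : sublin p -> exists q, [/\ sublin q,
  (forall x, q x <= p x), (forall z, z \in zs -> affine_along q z (q z)) &
  (forall w d, affine_along p w d -> affine_along q w d)].
Proof.
elim: zs p => [|z zs IH] p hp.
  by exists p; split => //.
have [q1 [hq1 q1p q1z q1w]] := @hb_step p z (p z) hp (sublin_lb z hp) (lexx (p z)).
have [q2 [hq2 q2p q2z q2w]] := IH q1 hq1.
exists q2; split => //.
- by move=> x; apply: le_trans (q2p x) (q1p x).
- move=> z'; rewrite in_cons => /predU1P[->|]; last exact: q2z.
  have hz := q2w _ _ q1z.
  have : q2 z = p z by have := hz 0 1; rewrite add0r scale1r mul1r (sublin0 hq2) add0r.
  by move=> ->.
- by move=> w d hw; apply: q2w; apply: q1w.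
Qed.

Lemma affine_sum q (I : Type) (s : seq I) (z : I -> V) (a : I -> R) :
  sublin q -> (forall i, affine_along q (z i) (q (z i))) ->
  q (\sum_(i <- s) a i *: z i) = \sum_(i <- s) a i * q (z i).
Proof.
move=> hq hz; elim: s => [|i s IH]; first by rewrite !big_nil (sublin0 hq).
by rewrite !big_cons addrC hz IH addrC.
Qed.

End HBfin.
Arguments sublin {R V}.
Arguments affine_along {R V}.
Arguments hb_step {R V}.
Arguments hb_list {R V}.
Arguments affine_sum {R V}.
Arguments sublin0 {R V p}.
Arguments sublin_lb {R V p}.

End HBpart.
Import HBpart.

Module MxPart.
Set Implicit Arguments. Unset Strict Implicit.
Section Mx.
Variable R : realType.
Variable k : nat.
Local Notation k1 := k.+1.
Implicit Types (M N X : 'M[R]_k1) (x : 'cV[R]_k1).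

Lemma e1x x : ((e1 R k)^T *m x) 0 0 = x 0 0.
Proof. by rewrite /e1 trmx_delta -rowE mxE. Qed.

Lemma EE : e1 R k *m (e1 R k)^T = delta_mx 0 0.
Proof. by rewrite /e1 trmx_delta mul_delta_mx. Qed.

Lemma qformE M x : qform M x = \sum_i \sum_j x i 0 * M i j * x j 0.
Proof.
rewrite /qform mxE exchange_big /=; apply: eq_bigr => j _.
rewrite mxE big_distrl /=; apply: eq_bigr => i _; by rewrite !mxE.
Qed.

Lemma frobE M N : frob M N = \sum_i \sum_j M i j * N j i.
Proof. by rewrite /frob /mxtrace; apply: eq_bigr => i _; rewrite mxE. Qed.

Lemma qformD M N x : qform (M + N) x = qform M x + qform N x.
Proof. by rewrite /qform mulmxDr mulmxDl mxE. Qed.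

Lemma qformZ a M x : qform (a *: M) x = a * qform M x.
Proof. by rewrite /qform -scalemxAr -scalemxAl mxE. Qed.

Lemma qformN M x : qform (- M) x = - qform M x.
Proof. by rewrite -(scaleN1r M) qformZ mulN1r. Qed.

Lemma qform0 x : qform 0 x = 0.
Proof. by rewrite /qform mulmx0 mul0mx mxE. Qed.

Lemma qformE1 x : qform (delta_mx 0 0) x = x 0 0 ^+ 2.
Proof.
rewrite qformE (bigD1 0) //= [X in _ + X = _]big1; last first.
  by move=> i ni0; rewrite big1 // => j _; rewrite mxE (negbTE ni0) /= mulr0 mul0r.
rewrite (bigD1 0) //= [X in _ + X + _ = _]big1; last first.
  by move=> j nj0; rewrite mxE (negbTE nj0) andbF mulr0 mul0r.
by rewrite mxE !eqxx mulr1 !addr0 expr2.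
Qed.

Lemma frobD M N X : frob (M + N) X = frob M X + frob N X.
Proof. by rewrite /frob mulmxDl mxtraceD. Qed.

Lemma frobZ a M X : frob (a *: M) X = a * frob M X.
Proof. by rewrite /frob -scalemxAl mxtraceZ. Qed.

Lemma frobN M X : frob (- M) X = - frob M X.
Proof. by rewrite -(scaleN1r M) frobZ mulN1r. Qed.

Lemma frob0 X : frob 0 X = 0.
Proof. by rewrite /frob mul0mx mxtrace0. Qed.

Lemma frob_sum (I : finType) (F : I -> 'M[R]_k1) X :
  frob (\sum_i F i) X = \sum_i frob (F i) X.
Proof. exact: (big_morph (fun M => frob M X) (fun M N => frobD M N X) (frob0 X)). Qed.

Lemma frobE1 X : frob (delta_mx 0 0) X = X 0 0.
Proof.
rewrite frobE (bigD1 0) //= [X in _ + X = _]big1; last first.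
  by move=> i ni0; rewrite big1 // => j _; rewrite mxE (negbTE ni0) /= mul0r.
rewrite (bigD1 0) //= [X in _ + X + _ = _]big1; last first.
  by move=> j nj0; rewrite mxE (negbTE nj0) andbF mul0r.
by rewrite mxE !eqxx mul1r !addr0.
Qed.

Lemma symmxP M : symmx M <-> forall i j, M j i = M i j.
Proof.
rewrite /symmx; split=> [h i j|h]; first by have := congr1 (fun A : 'M[R]_k1 => A i j) h; rewrite mxE.
by apply/matrixP => i j; rewrite mxE h.
Qed.

Lemma symmxD M N : symmx M -> symmx N -> symmx (M + N).
Proof. by move=> /symmxP hM /symmxP hN; apply/symmxP => i j; rewrite !mxE hM hN. Qed.
Lemma symmxZ a M : symmx M -> symmx (a *: M).
Proof. by move=> /symmxP hM; apply/symmxP => i j; rewrite !mxE hM. Qed.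
Lemma symmxN M : symmx M -> symmx (- M).
Proof. by move=> /symmxP hM; apply/symmxP => i j; rewrite !mxE hM. Qed.
Lemma symmx0 : symmx (0 : 'M[R]_k1).
Proof. exact: trmx0. Qed.
Lemma symmx_sum (I : finType) (F : I -> 'M[R]_k1) :
  (forall i, symmx (F i)) -> symmx (\sum_i F i).
Proof.
move=> h; apply/symmxP => i j; rewrite !summxE; apply: eq_bigr => l _.
by have /symmxP := h l; apply.
Qed.
Lemma symmxE1 : symmx (delta_mx 0 0 : 'M[R]_k1).
Proof. by rewrite /symmx trmx_delta. Qed.

Variable K : set 'cV[R]_k1.

Lemma COP0 : COP K 0.
Proof. by split; [exact: symmx0 | move=> x _; rewrite qform0]. Qed.
Lemma COPD M N : COP K M -> COP K N -> COP K (M + N).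
Proof.
move=> [sM hM] [sN hN]; split; first exact: symmxD.
by move=> x Kx; rewrite qformD addr_ge0 // ?hM ?hN.
Qed.
Lemma COPZ a M : 0 <= a -> COP K M -> COP K (a *: M).
Proof.
move=> a0 [sM hM]; split; first exact: symmxZ.
by move=> x Kx; rewrite qformZ mulr_ge0 // hM.
Qed.
Lemma COPE1 : COP K (delta_mx 0 0).
Proof. by split; [exact: symmxE1 | move=> x _; rewrite qformE1 sqr_ge0]. Qed.


Hypothesis hKcone : convex_cone K.
Hypothesis hLne : [set x | K x /\ ((e1 R k)^T *m x) 0 0 = 1] !=set0.
Hypothesis hLbd : bounded_vset [set x | K x /\ ((e1 R k)^T *m x) 0 0 = 1].

Lemma Kbound : exists r : R, 0 <= r /\ forall x, K x -> forall i, `|x i 0| <= r * `|x 0 0|.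
Proof.
have [r hr] := hLbd; have [y [Ky y1]] := hLne; rewrite e1x in y1.
have Ly : forall x, K x -> x 0 0 = 1 -> forall i, `|x i 0| <= r.
  by move=> x Kx x1 i; apply: hr; split => //; rewrite e1x.
have r0 : 0 <= r by have := Ly y Ky y1 0; rewrite y1 normr1; apply: le_trans.
have Kadd := proj1 hKcone; have Kscal := proj2 hKcone.
have zero : forall x, K x -> x 0 0 = 0 -> forall i, x i 0 = 0.
  move=> x Kx x0 i; case: (eqVneq (x i 0) 0) => // nz; exfalso.
  have nzp : 0 < `|x i 0| by rewrite normr_gt0.
  pose s := (2 * r + 1) / `|x i 0|.
  have s0 : 0 <= s by rewrite divr_ge0 // ?ltW //; lra.
  have Ks : K (y + s *: x) by apply: Kadd => //; apply: Kscal.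
  have h1 := Ly _ Ks; rewrite !mxE y1 x0 mulr0 addr0 in h1.
  have h2 := h1 erefl i; rewrite !mxE in h2.
  have h3 := Ly y Ky y1 i.
  have h4 : `|s * x i 0| = 2 * r + 1.
    by rewrite normrM ger0_norm // /s -mulrA mulVf ?gt_eqF // mulr1.
  have h5 : `|s * x i 0| <= `|y i 0 + s * x i 0| + `|y i 0|.
    by have := ler_normB (y i 0 + s * x i 0) (y i 0); rewrite addrC addKr.
  lra.
exists r; split => // x Kx i.
case: (ltgtP (x 0 0) 0) => [xn|xp|x0]; last first.
- by rewrite (zero x Kx x0 i) x0 normr0 mulr0.
- have hinv : 0 <= (x 0 0)^-1 by rewrite invr_ge0 ltW.
  have Kz : K ((x 0 0)^-1 *: x) by apply: Kscal.
  have := Ly _ Kz; rewrite mxE mulVf ?gt_eqF // => /(_ erefl i).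
  rewrite mxE normrM (ger0_norm hinv) (ger0_norm (ltW xp)) ler_pdivrMl // => h.
  by rewrite mulrC.
- have xn' : 0 < - x 0 0 by rewrite oppr_gt0.
  have hinv : 0 <= (- x 0 0)^-1 by rewrite invr_ge0 ltW.
  have Kz : K ((- x 0 0)^-1 *: x) by apply: Kscal.
  have Kyz := Kadd _ _ Ky Kz.
  have z0 : (y + (- x 0 0)^-1 *: x) 0 0 = 0.
    by rewrite !mxE y1 invrN mulNr mulVf ?lt_eqF // subrr.
  have := zero _ Kyz z0 i; rewrite !mxE => /eqP; rewrite addr_eq0 => /eqP hz.
  have := Ly y Ky y1 i; rewrite hz normrN normrM (ger0_norm hinv).
  by rewrite ler_pdivrMl // (ltr0_norm xn) mulrC.
Qed.

Lemma BIG (S : 'M[R]_k1) : symmx S -> exists t : R, COP K (t *: delta_mx 0 0 - S).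
Proof.
move=> hS; have [r [r0 hr]] := Kbound.
exists (r ^+ 2 * \sum_i \sum_j `|S i j|); split.
  by apply: symmxD; [apply: symmxZ; exact: symmxE1 | exact: symmxN].
move=> x Kx; rewrite qformD qformZ qformN qformE1 subr_ge0 qformE.
have -> : r ^+ 2 * (\sum_i \sum_j `|S i j|) * x 0 0 ^+ 2 =
   \sum_i \sum_j `|S i j| * (r ^+ 2 * x 0 0 ^+ 2).
  rewrite mulrC mulrA mulrC big_distrl /=; apply: eq_bigr => i _.
  by rewrite big_distrl /=; apply: eq_bigr => j _; rewrite [x 0 0 ^+ 2 * _]mulrC.
apply: ler_sum => i _; apply: ler_sum => j _.
have hi := hr x Kx i; have hj := hr x Kx j.
have A := ler_pM (normr_ge0 _) (normr_ge0 _) hi hj.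
have B : 0 <= `|S i j| := normr_ge0 _.
have C : x i 0 * S i j * x j 0 <= `|x i 0| * `|S i j| * `|x j 0|.
  by rewrite -!normrM ler_norm.
have D : `|x 0 0| ^+ 2 = x 0 0 ^+ 2 by rewrite real_normK ?num_real.
have E := ler_wpM2l B A.
apply: (le_trans C).
have -> : `|x i 0| * `|S i j| * `|x j 0| = `|S i j| * (`|x i 0| * `|x j 0|) by ring.
apply: (le_trans E); rewrite -D le_eqVlt; apply/orP; left; apply/eqP; ring.
Qed.

End Mx.

End MxPart.
Import MxPart.

Lemma swap6 (V : zmodType) (a b c d e f : V) :
  (a + b - c) + (d + e - f) = (a + d) + (b + e) - (c + f).
Proof. by rewrite addrACA [a + b + _]addrACA opprD. Qed.

Section Arith.
Variable R : realType.
Implicit Types a b c p q t u x y : R.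
Lemma ar1 a b c : a - c <= b -> a - b <= c. Proof. lra. Qed.
Lemma ar2 a t u : a <= t + u -> a - u <= t. Proof. lra. Qed.
Lemma ar3 a b c : a - b <= c -> a <= b + c. Proof. lra. Qed.
Lemma ar4 t u : 0 <= t + u -> - u <= t. Proof. lra. Qed.
Lemma ar5 a b x y p q : x = a + -1 * b -> x <= p -> p <= 0 ->
  y = b + -1 * a -> y <= q -> q <= 0 -> b = a.
Proof. lra. Qed.
Lemma ar7 x p : - x <= p -> p <= 0 -> 0 <= x. Proof. lra. Qed.
Lemma ar8 x p q : x <= p -> - x <= q -> p <= 1 -> q <= -1 -> x = 1. Proof. lra. Qed.
Lemma ar9 x p q : x <= p -> - x <= q -> p <= 0 -> q <= 0 -> x = 0. Proof. lra. Qed.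
End Arith.

Theorem lemma8 (R : realType) (k n : nat) (hn : (0 < n)%N)
  (Q0 : 'M[R]_k.+1) (Q : 'I_n -> 'M[R]_k.+1)
  (hQ0 : symmx Q0) (hQ : forall i, symmx (Q i))
  (K : set 'cV[R]_k.+1)
  (hKne : K !=set0) (hKcl : closed K) (hKcone : convex_cone K)
  (hLne : [set x | K x /\ ((e1 R k)^T *m x) 0 0 = 1] !=set0)
  (hLbd : bounded_vset [set x | K x /\ ((e1 R k)^T *m x) 0 0 = 1]) :
  ereal_sup [set (frob Q0 X)%:E | X in
      [set X | frob (e1 R k *m (e1 R k)^T) X = 1 /\ CP K X /\
               forall i, frob (Q i) X = 0]] =
  ereal_inf [set beta%:E | beta in
      [set beta : R | exists psi : 'I_n -> R,
         COP K (beta *: (e1 R k *m (e1 R k)^T) + \sum_(i < n) psi i *: Q i - Q0)]].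
Proof.
rewrite !EE.
set E : 'M[R]_k.+1 := delta_mx 0 0.
have BIG' := BIG hKcone hLne hLbd.
pose sy (A : 'M[R]_k.+1) : 'M[R]_k.+1 := 2^-1 *: (A + A^T).
have syS : forall A, symmx A -> sy A = A.
  move=> A /symmxP hM; apply/matrixP => i j; rewrite !mxE hM; lra.
have sy_sym : forall A, symmx (sy A).
  by move=> A0; apply/symmxP => i j; rewrite !mxE addrC.
have syD : forall A B, sy (A + B) = sy A + sy B.
  by move=> A B; apply/matrixP => i j; rewrite !mxE; ring.
have syZ : forall a A, sy (a *: A) = a *: sy A.
  by move=> a A; apply/matrixP => i j; rewrite !mxE; ring.
pose Mat t (psi : 'I_n -> R) A := t *: E + \sum_i psi i *: Q i - sy A.
have MatD : forall t psi A u phi B, Mat t psi A + Mat u phi B =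
    Mat (t + u) (fun i => psi i + phi i) (A + B).
  move=> t psi A u phi B; rewrite /Mat swap6 -scalerDl syD; congr (_ + _ - _).
  by rewrite -big_split /=; apply: eq_bigr => i _; rewrite scalerDl.
have MatZ : forall a t psi A, a *: Mat t psi A = Mat (a * t) (fun i => a * psi i) (a *: A).
  move=> a t psi A; rewrite /Mat scalerBr scalerDr scalerA syZ scaler_sumr.
  by congr (_ + _ - _); apply: eq_bigr => i _; rewrite scalerA.
have Mat0 : forall t A, Mat t (fun=> 0) A = t *: E - sy A.
  by move=> t A; rewrite /Mat big1 ?addr0 // => i _; rewrite scale0r.
pose D A := [set t | exists psi, COP K (Mat t psi A)].
have sy0 : sy 0 = 0 by rewrite /sy trmx0 addr0 scaler0.
have syN : forall A, sy (- A) = - sy A.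
  by move=> A; rewrite -scaleN1r syZ scaleN1r.
have weak : forall X t psi A, CP K X -> frob E X = 1 -> (forall i, frob (Q i) X = 0) ->
    COP K (Mat t psi A) -> frob (sy A) X <= t.
  move=> X t psi A [_ hX] hE hQX hC; have := hX _ hC.
  rewrite /Mat !frobD frobN frobZ frob_sum hE mulr1 big1 ?addr0 ?subr_ge0 //.
  by move=> i _; rewrite frobZ hQX mulr0.
have BD : [set beta : R | exists psi : 'I_n -> R,
         COP K (beta *: E + \sum_(i < n) psi i *: Q i - Q0)] = D Q0.
  apply/seteqP; split => t [psi h]; exists psi; [rewrite /Mat (syS _ hQ0) | move: h; rewrite /Mat (syS _ hQ0)] => //.
rewrite BD.
have [[t0 [psi0 [ht0 hc0]]]|nb] := pselect (exists t psi, t < 0 /\ COP K (Mat t psi 0)).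
  have -> : D Q0 = setT.
    apply/seteqP; split => // b _.
    have [t' ht'] := BIG' Q0 hQ0.
    have ht'' : COP K (Mat t' (fun=> 0) Q0) by rewrite Mat0 syS.
    have [bt|bt] := leP t' b.
      have bt' : 0 <= b - t' by rewrite subr_ge0.
      have := COPD ht'' (COPZ bt' (COPE1 K)) => hc; exists (fun=> 0).
      have -> : Mat b (fun=> 0) Q0 = Mat t' (fun=> 0) Q0 + (b - t') *: E.
        by rewrite !Mat0 addrAC -scalerDl [t' + _]addrC subrK.
      exact: hc.
    have t0n : - t0 != 0 by rewrite oppr_eq0 lt_eqF.
    pose l := (t' - b) / (- t0).
    have l0 : 0 <= l.
      by apply: divr_ge0; [rewrite subr_ge0; exact: ltW | rewrite oppr_ge0; exact: ltW].
    have := COPD (COPZ l0 hc0) ht''; rewrite MatZ MatD scaler0 add0r.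
    have -> : l * t0 + t' = b.
      rewrite /l invrN mulrN mulNr -mulrA mulVf ?mulr1; [by rewrite opprB subrK | by rewrite lt_eqF].
    by move=> hc; exists (fun i => l * psi0 i + 0).
  rewrite ereal_inf_real; apply/ereal_sup_ninfty => y [X [hE [hCP hQX]] _].
  have := weak X t0 psi0 0 hCP hE hQX hc0; rewrite sy0 frob0 => h; exfalso; move: ht0; by rewrite ltNge h.
have G : forall t psi, COP K (Mat t psi 0) -> 0 <= t.
  move=> t psi h; rewrite leNgt; apply/negP => tlt; apply: nb; by exists t, psi.
have Dne : forall A, D A !=set0.
  by move=> A; have [t ht] := BIG' (sy A) (sy_sym A); exists t, (fun=> 0); rewrite Mat0.
have Dlb : forall A, exists b, forall t, D A t -> b <= t.
  move=> A; have [t' ht'] := BIG' (- sy A) (symmxN (sy_sym A)).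
  exists (- t') => t [psi hp].
  have hc : COP K (Mat t' (fun=> 0) (- A)) by rewrite Mat0 syN.
  by have := COPD hp hc; rewrite MatD subrr => /G; exact: ar4.
pose pi (A : 'M[R]_k.+1) := inf (D A).
have pi_le : forall A t, D A t -> pi A <= t.
  by move=> A t Dt; have [b hb] := Dlb A; exact: (ge_inf (ex_intro _ b hb) Dt).
have pi_ge : forall A a, (forall t, D A t -> a <= t) -> a <= pi A.
  by move=> A a h; apply: lb_le_inf (Dne A) _ => t Dt; exact: h.
have hsub : sublin pi.
  split.
  - move=> A B.
    have h : forall t u, D A t -> D B u -> pi (A + B) <= t + u.
      move=> t u [psi hp] [phi hq]; apply: pi_le; exists (fun i => psi i + phi i).
      by rewrite -MatD; exact: COPD.
    have h2 : forall u, D B u -> pi (A + B) - u <= pi A.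
      by move=> u Du; apply: pi_ge => t Dt; exact: ar2 (h t u Dt Du).
    have : pi (A + B) - pi A <= pi B.
      by apply: pi_ge => u Du; exact: ar1 (h2 u Du).
    exact: ar3.
  - move=> a A; rewrite le_eqVlt => /predU1P[<-|a0].
      rewrite scale0r mul0r; apply/eqP; rewrite eq_le; apply/andP; split.
        apply: pi_le; exists (fun=> 0); rewrite Mat0 sy0 scale0r subrr; exact: COP0 K.
      by apply: pi_ge => t [psi hp]; exact: G hp.
    apply/eqP; rewrite eq_le; apply/andP; split.
      rewrite -ler_pdivrMl //; apply: pi_ge => t [psi hp]; rewrite ler_pdivrMl //.
      apply: pi_le; exists (fun i => a * psi i); rewrite -MatZ; exact: COPZ (ltW a0) hp.
    apply: pi_ge => t [psi hp]; rewrite -ler_pdivlMl //; apply: pi_le.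
    exists (fun i => a^-1 * psi i).
    have ai : 0 <= a^-1 by rewrite invr_ge0 ltW.
    by have := COPZ ai hp; rewrite MatZ scalerA mulVf ?gt_eqF // scale1r.
have [q1 [hq1 q1le q1aff q1pres]] := hb_step pi Q0 (pi Q0) hsub (sublin_lb Q0 hsub) (lexx _).
pose zs := map (fun p : 'I_k.+1 * 'I_k.+1 => (delta_mx p.1 p.2 : 'M[R]_k.+1))
   (enum {: 'I_k.+1 * 'I_k.+1}).
have [q2 [hq2 q2le q2aff q2pres]] := hb_list zs q1 hq1.
have q2d : forall p : 'I_k.+1 * 'I_k.+1,
    affine_along q2 (delta_mx p.1 p.2) (q2 (delta_mx p.1 p.2)).
  by move=> p; apply: q2aff; apply: map_f; rewrite mem_enum.
have q2Q0 : q2 Q0 = pi Q0.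
  by have := q2pres _ _ q1aff 0 1; rewrite add0r scale1r mul1r (sublin0 hq2) add0r.
pose Y : 'M[R]_k.+1 := \matrix_(i, j) q2 (delta_mx i j).
have q2F : forall A, q2 A = \sum_i \sum_j A i j * Y i j.
  move=> A; rewrite {1}(matrix_sum_delta A) pair_bigA /=.
  rewrite (affine_sum q2 _ _ (fun p => delta_mx p.1 p.2) (fun p => A p.1 p.2) hq2 q2d).
  by rewrite pair_bigA /=; apply: eq_bigr => p _; rewrite mxE.
have q2pi : forall A, q2 A <= pi A.
  by move=> A; apply: le_trans (q2le A) (q1le A).
have piN0 : forall A, sy A = 0 -> pi A <= 0.
  move=> A hA; apply: pi_le; exists (fun=> 0).
  by rewrite Mat0 hA scale0r subr0; exact: COP0 K.
have Ysym : forall i j, Y j i = Y i j.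
  move=> i j; rewrite !mxE.
  have hN : sy (delta_mx i j - delta_mx j i) = 0.
    apply/matrixP => a b; rewrite !mxE [(b == i) && _]andbC [(b == j) && _]andbC; ring.
  have hN' : sy (delta_mx j i - delta_mx i j) = 0 by rewrite -opprB syN hN oppr0.
  have h1 := q2pi (delta_mx i j - delta_mx j i).
  have h2 := q2pi (delta_mx j i - delta_mx i j).
  have e1 := q2d (j, i) (delta_mx i j) (-1); rewrite /= scaleN1r in e1.
  have e2 := q2d (i, j) (delta_mx j i) (-1); rewrite /= scaleN1r in e2.
  exact: ar5 e1 h1 (piN0 _ hN) e2 h2 (piN0 _ hN').
have frobY : forall A, frob A Y = q2 A.
  move=> A; rewrite frobE q2F; apply: eq_bigr => i _; apply: eq_bigr => j _.
  by rewrite Ysym.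
have ell : forall A, frob A Y <= pi A by move=> A; rewrite frobY.
have sumQ : forall c i, \sum_l (if l == i then c else 0) *: Q l = c *: Q i.
  move=> c i; rewrite (bigD1 i) //= eqxx big1 ?addr0 // => l /negbTE ->.
  exact: scale0r.
have YCP : CP K Y.
  split; first by apply/symmxP => i j; exact: Ysym.
  move=> A hA; have h := ell (- A).
  have : pi (- A) <= 0.
    apply: pi_le; exists (fun=> 0).
    by rewrite Mat0 syN opprK (syS _ (proj1 hA)) scale0r add0r.
  rewrite frobN in h; exact: ar7.
have YE : frob E Y = 1.
  have h1 := ell E; have h2 := ell (- E); rewrite frobN in h2.
  have p1 : pi E <= 1.
    apply: pi_le; exists (fun=> 0); rewrite Mat0 (syS _ (symmxE1 _ _)) scale1r subrr.
    exact: COP0 K.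
  have p2 : pi (- E) <= -1.
    apply: pi_le; exists (fun=> 0).
    rewrite Mat0 syN (syS _ (symmxE1 _ _)) scaleN1r subrr; exact: COP0 K.
  exact: ar8 h1 h2 p1 p2.
have YQ : forall i, frob (Q i) Y = 0.
  move=> i; have h1 := ell (Q i); have h2 := ell (- Q i); rewrite frobN in h2.
  have p1 : pi (Q i) <= 0.
    apply: pi_le; exists (fun l => if l == i then 1 else 0).
    rewrite /Mat sumQ scale0r add0r scale1r (syS _ (hQ i)) subrr; exact: COP0 K.
  have p2 : pi (- Q i) <= 0.
    apply: pi_le; exists (fun l => if l == i then -1 else 0).
    rewrite /Mat sumQ scale0r add0r scaleN1r syN (syS _ (hQ i)) subrr; exact: COP0 K.
  exact: ar9 h1 h2 p1 p2.
have [b hb] := Dlb Q0.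
rewrite ereal_inf_EFin; last exact: Dne; last by exists b.
apply/eqP; rewrite eq_le; apply/andP; split.
  apply: ge_ereal_sup => y [X [hE [hCP hQX]] <-]; rewrite lee_fin.
  apply: pi_ge => t [psi hp]; have := weak X t psi Q0 hCP hE hQX hp.
  by rewrite (syS _ hQ0).
apply: ereal_sup_ubound; exists Y; first by split => //; split.
by rewrite frobY q2Q0.
Qed.
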